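(* Let $G$ be a finite group, $\xi:G\to G$ an automorphism, $k>0$ an integer, and $\nu:G^k\to G^k$ the automorphism $\nu(g_0,\dots,g_{k-1})=(\xi(g_{k-1}),g_0,\dots,g_{k-2})$. Let $G^k$ act on $KG^k$ by $a\cdot b=ab\nu(a)^{-1}$ and $G$ act on $KG$ by $a\cdot b=ab\xi(a)^{-1}$ (for group elements $a,b$, extended linearly in $b$). Then the map $G^k\to G$, $(g_0,\dots,g_{k-1})\mapsto g_{k-1}\cdots g_0$, induces a linear isomorphism of coinvariant spaces $(KG^k)_{G^k}\to(KG)_G$.
   Context: $K$ is a field of characteristic $0$; $(KG)_G$ denotes the space of coinvariants $KG/\mathrm{span}\{a\cdot b-b\}$. *)

(* Defs.v *)
From HB Require Import structures.
From mathcomp Require Import all_boot all_order all_algebra all_fingroup.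
Set Implicit Arguments. Unset Strict Implicit. Unset Printing Implicit Defensive.
Import GRing.Theory.
Local Open Scope ring_scope.

(* The group algebra K[T] of a finite set T, as the K-vector space of
   finitely supported functions T -> K; [bas x] is the basis vector of x. *)
Definition galg (K : fieldType) (T : finType) := {ffun T -> K^o}.

Definition bas (K : fieldType) (T : finType) (x : T) : galg K T :=
  [ffun y => (y == x)%:R].

(* Span of {a.b - b} for an action [act] of A on the basis T:
   the kernel of the projection K[T] -> K[T]_A (coinvariants). *)
Definition coinv_rel (K : fieldType) (A T : finType) (act : A -> T -> T)
  : {vspace galg K T} :=
  <<[seq bas K (act a b) - bas K b | a <- enum A, b <- enum T]>>%VS.

Definition linext (K : fieldType) (T U : finType) (f : T -> U)
  : 'Hom(galg K T, galg K U) :=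
  linfun (fun v : galg K T => \sum_(x : T) v x *: bas K (f x)).

(* The linear map L : V -> V' induces a well-defined linear isomorphism
   V / W -> V' / W'. *)
Definition induces_iso (K : fieldType) (vT wT : vectType K) (L : 'Hom(vT, wT))
  (W : {vspace vT}) (W' : {vspace wT}) : Prop :=
  [/\ (L @: W <= W')%VS,                              (* well defined *)
      (forall v, L v \in W' -> v \in W)               (* injective *)
    & (L @: fullv + W' = fullv)%VS].                  (* surjective *)

Section Twisted.
Variables (gT : finGroupType) (xi : gT -> gT) (k : nat).
Local Open Scope group_scope.

Definition nu (g : {ffun 'I_k -> gT}) : {ffun 'I_k -> gT} :=
  [ffun i : 'I_k => if val i == 0%N then xi (g (ord_pred i)) else g (ord_pred i)].

Definition tw_actk (a b : {ffun 'I_k -> gT}) : {ffun 'I_k -> gT} :=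
  [ffun i => a i * b i * (nu a i)^-1].

Definition tw_act1 (a b : gT) : gT := a * b * (xi a)^-1.

Definition revprod (g : {ffun 'I_k -> gT}) : gT :=
  \prod_(i <- rev (enum 'I_k)) g i.
End Twisted.

(* Main.v *)
From HB Require Import structures.
Require Import Defs.
From mathcomp Require Import all_boot all_order all_algebra all_fingroup.
Set Implicit Arguments. Unset Strict Implicit. Unset Printing Implicit Defensive.
Import GRing.Theory.
Local Open Scope ring_scope.

Section LA.
Variable K : fieldType.

Lemma bas_decomp (T : finType) (v : galg K T) : v = \sum_x v x *: bas K x.
Proof.
apply/ffunP => y; rewrite sum_ffunE (bigD1 y) //= big1 => [|x /negbTE nx].
  by rewrite !ffunE eqxx addr0 /=; by rewrite /GRing.scale /= mulr1.
by rewrite !ffunE eq_sym nx; by rewrite /GRing.scale /= mulr0.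
Qed.

Section Lin.
Variables (T U : finType) (f : T -> U).
Definition linf (v : galg K T) : galg K U := \sum_x v x *: bas K (f x).
Lemma linf_lin : linear linf.
Proof.
move=> a u w; rewrite /linf scaler_sumr -big_split; apply: eq_bigr => x _.
by rewrite !ffunE scalerA scalerDl.
Qed.
HB.instance Definition _ := GRing.isLinear.Build K (galg K T) (galg K U) _ linf linf_lin.
Lemma linextE v : linext K f v = linf v.
Proof. by rewrite /linext; exact: (lfunE (linf : {linear _ -> _})). Qed.
Lemma linext_bas x : linext K f (bas K x) = bas K (f x).
Proof.
rewrite linextE /linf (bigD1 x) //= big1 => [|y /negbTE ny].
  by rewrite ffunE eqxx scale1r addr0.
by rewrite ffunE ny scale0r.
Qed.
End Lin.

Lemma coinv_mem (A T : finType) (act : A -> T -> T) a b :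
  bas K (act a b) - bas K b \in coinv_rel K act.
Proof. by apply/memv_span/allpairs_f; rewrite mem_enum. Qed.

Lemma limg_coinv (A T : finType) (vT : vectType K) (act : A -> T -> T)
  (L : 'Hom(galg K T, vT)) (W : {vspace vT}) :
  (forall a b, L (bas K (act a b) - bas K b) \in W) -> (L @: coinv_rel K act <= W)%VS.
Proof.
move=> H; rewrite /coinv_rel limg_span; apply/span_subvP => y.
by case/mapP => x /allpairsP [[a b] [_ _ ->]] ->.
Qed.
End LA.

Section Grp.
Variables (gT : finGroupType) (xi : gT -> gT).
Hypothesis xi_morph : {morph xi : x y / (x * y)%g}.
Variable k : nat.
Local Open Scope group_scope.
Local Notation G := {ffun 'I_k.+1 -> gT}.

Lemma xi1 : xi 1 = 1.
Proof. by apply: (mulgI (xi 1)); rewrite -xi_morph !mulg1. Qed.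

Lemma revprodE (g : G) : revprod g = \prod_(j <- rev (iota 0 k.+1)) g (inord j).
Proof.
rewrite /revprod -val_enum_ord -map_rev big_map.
by apply: eq_bigr => i _; rewrite inord_val.
Qed.

Lemma nu_pos (a : G) j : (0 < j <= k)%N -> nu xi a (inord j) = a (inord j.-1).
Proof.
case/andP=> j0 jk; rewrite ffunE /= inordK ?ltnS // eqn0Ngt j0 /=; congr (a _).
have hj : (j.-1 < k.+1)%N by rewrite ltnS (leq_trans (leq_pred j)).
apply: val_inj; rewrite /= (inordK hj) inordK ?ltnS //.
by case: j j0 jk hj => //= j _ _ hj; rewrite modnDr modn_small.
Qed.

Lemma nu_0 (a : G) : nu xi a (inord 0) = xi (a (inord k)).
Proof.
rewrite ffunE /= inordK //=; congr (xi (a _)); apply: val_inj.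
rewrite /= !inordK // add0n /=. by rewrite modn_small.
Qed.

Lemma tele (A B : nat -> gT) n :
  \prod_(j <- rev (iota 1 n)) (A j * B j * (A j.-1)^-1)
  = A n * (\prod_(j <- rev (iota 1 n)) B j) * (A 0)^-1.
Proof.
elim: n => [|n IH]; first by rewrite !big_nil mulg1 mulgV.
have -> : iota 1 n.+1 = rcons (iota 1 n) n.+1.
  by rewrite -(addn1 n) iotaD cats1 addnC.
rewrite rev_rcons !big_cons IH /=.
by rewrite !mulgA mulgKV.
Qed.

Lemma revprod_act (a b : G) :
  revprod (tw_actk xi a b) = tw_act1 xi (a (inord k)) (revprod b).
Proof.
rewrite !revprodE /= rev_cons !big_rcons /=.
rewrite (eq_big_seq (fun j => a (inord j) * b (inord j) * (a (inord j.-1))^-1)); last first.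
  move=> j; rewrite mem_rev mem_iota add1n ltnS => hj.
  by rewrite ffunE nu_pos.
rewrite tele ffunE nu_0 /tw_act1 !mulgA mulgKV.
done.
Qed.

Definition sec (y : gT) : G := [ffun i : 'I_k.+1 => if nat_of_ord i == 0%N then y else 1].

Lemma revprod_sec y : revprod (sec y) = y.
Proof.
rewrite revprodE /= rev_cons big_rcons /= big1_seq ?mul1g.
  by rewrite ffunE inordK.
move=> j; rewrite mem_rev mem_iota add1n ltnS => /andP[_ /andP[j0 jk]].
by rewrite ffunE /= inordK ?ltnS // eqn0Ngt j0.
Qed.

Lemma nu_posi (a : G) (i : 'I_k.+1) : (0 < i)%N -> nu xi a i = a (inord i.-1).
Proof. by move=> ip; rewrite -{1}(inord_val i) nu_pos // ip /= -ltnS ltn_ord. Qed.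

Lemma nu_0i (a : G) (i : 'I_k.+1) : nat_of_ord i = 0%N -> nu xi a i = xi (a (inord k)).
Proof.
move=> i0; have -> : i = inord 0 by apply: val_inj; rewrite /= inordK.
exact: nu_0.
Qed.

Lemma act_sec c y : tw_actk xi [ffun=> c] (sec y) = sec (tw_act1 xi c y).
Proof.
apply/ffunP => i; rewrite !ffunE.
case: (posnP i) => [i0|ip].
  by [].
by rewrite mulg1 mulgV.
Qed.

Definition Pp (g : G) m := \prod_(j <- rev (iota m (k.+1 - m))) g (inord j).

Lemma PS (g : G) m : (m <= k)%N -> Pp g m = Pp g m.+1 * g (inord m).
Proof.
by move=> mk; rewrite /Pp subSn // subSS /= rev_cons big_rcons.
Qed.

Lemma to_sec (g : G) : exists a, tw_actk xi a g = sec (revprod g).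
Proof.
exists [ffun i : 'I_k.+1 => Pp g (nat_of_ord i).+1].
apply/ffunP => i; rewrite [LHS]ffunE [RHS]ffunE.
case: (posnP i) => [i0|ip].
  rewrite nu_0i // !ffunE inordK //= i0 /Pp subnn big_nil xi1 invg1 mulg1.
  have -> : i = inord 0 by apply: val_inj; rewrite /= inordK.
  by rewrite -(PS g (leq0n k)) revprodE.
have hi : (i.-1 < k.+1)%N by rewrite ltnS (leq_trans (leq_pred _)) // -ltnS.
rewrite nu_posi // !ffunE (inordK hi) prednK //.
by rewrite -[g i](congr1 g (inord_val i)) -PS ?mulgV // -ltnS ltn_ord.
Qed.
End Grp.

Theorem lemma6p4 (K : fieldType) (hK : [pchar K]%R =i pred0)
  (gT : finGroupType) (xi : gT -> gT)
  (xi_morph : {morph xi : x y / (x * y)%g}) (xi_bij : bijective xi)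
  (k : nat) (hk : (0 < k)%N) :
  induces_iso (linext K (@revprod gT k))
    (coinv_rel K (@tw_actk gT xi k))
    (coinv_rel K (@tw_act1 gT xi)).
Proof.
case: k hk => // k _.
set L := linext K _.
have LB x : L (bas K x) = bas K (revprod x) by rewrite /L linext_bas.
set S := linext K (@sec gT k).
have SB y : S (bas K y) = bas K (sec k y) by rewrite /S linext_bas.
split.
- apply: limg_coinv => a b; rewrite linearB /= !LB revprod_act //.
  exact: coinv_mem.
- move=> v Lv.
  have SW : (S @: coinv_rel K (tw_act1 xi) <= coinv_rel K (@tw_actk gT xi k.+1))%VS.
    apply: limg_coinv => c y; rewrite linearB /= !SB -act_sec //.
    exact: coinv_mem.
  have d : v - S (L v) \in coinv_rel K (@tw_actk gT xi k.+1).
    have -> : v - S (L v) = \sum_g v g *: (bas K g - bas K (sec k (revprod g))).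
      rewrite {1}(bas_decomp v) [v in L v](bas_decomp v) !linear_sum -big_split.
      by apply: eq_bigr => g _; rewrite /= !linearZ /= LB SB scalerBr scalerN.
    apply: memv_suml => g _; apply: memvZ.
    have [a <-] := to_sec xi_morph g.
    by rewrite -opprB memvN coinv_mem.
  have h : S (L v) \in coinv_rel K (@tw_actk gT xi k.+1) := subvP SW _ (memv_img S Lv).
  by rewrite -(subrK (S (L v)) v); apply: memvD.
- apply/eqP; rewrite eqEsubv subvf /=; apply/subvP => w _.
  have -> : w = L (S w) + 0.
    rewrite addr0 {2}(bas_decomp w) !linear_sum /=.
    rewrite {1}(bas_decomp w); apply: eq_bigr => y _.
    by rewrite !linearZ /= SB LB revprod_sec.
  by apply: memv_add; [apply: memv_img; apply: memvf | apply: mem0v].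
Qed.
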